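(* The language $L_2=\{\,a^{2^n} b^{n} c^{2^n+n} \mid n \ge 1\,\}$ belongs to $\mathscr{L}_{rt}(\mathrm{MC\text{-}OCA}(1))$.
   Context: A cellular automaton (CA) is a system $\langle S,F,A,B,\#,b_l,b_r,\delta\rangle$ with finite nonempty state set $S$, accepting states $F\subseteq S$, nonempty input alphabet $A\subseteq S$, set $B$ of communication symbols, boundary symbol $\#\notin B$, communication functions $b_l,b_r:S\to B\cup\{\bot\}$ ($\bot$ means nothing is sent), and local transition function $\delta:(B\cup\{\#,\bot\})\times S\times(B\cup\{\#,\bot\})\to S$. On input $w=a_1\cdots a_n$ the cells $1,\dots,n$ start in $c_0(i)=a_i$ and update synchronously by $c_{t+1}(i)=\delta(b_r(c_t(i-1)),c_t(i),b_l(c_t(i+1)))$; the outer cells receive $\#$ on their free side at the first step and $\bot$ afterwards. Acceptance: the leftmost cell enters an accepting state at some time. Time complexity $t$: every accepted $w$ is accepted within $t(|w|)$ steps; real time: $t(n)=n$. A one-way CA (OCA) has $b_r\equiv\bot$ and the leftmost cell gets no boundary symbol. $\mathrm{com}(i,t)$ is the number of steps $j<t$ with $b_r(c_j(i))\ne\bot$ or $b_l(c_j(i+1))\ne\bot$; $\mathrm{mcom}(w)=\max_i \mathrm{com}(i,t(|w|))$. $\mathrm{MC\text{-}OCA}(f)$ denotes OCAs such that every accepted $w$ is accepted with $\mathrm{mcom}(w)\le g(|w|)$ for some $g\in O(f)$; $\mathscr{L}_{rt}(X)$ is the family of languages accepted by real-time devices of type $X$. *)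

(* Defs.v *)
From mathcomp Require Import all_boot.
Set Implicit Arguments. Unset Strict Implicit. Unset Printing Implicit Defensive.

(* What a cell receives from a neighbour: a communication symbol,
   the boundary symbol #, or nothing (bottom). *)
Inductive msg (B : Type) := MSym of B | MBound | MNone.
Arguments MBound {B}. Arguments MNone {B}.

Definition of_opt (B : Type) (o : option B) : msg B :=
  if o is Some b then MSym b else MNone.

(* A cellular automaton over input alphabet Sigma.  The input alphabet
   A ⊆ S is represented by an injective embedding inp : Sigma -> S.
   Sending nothing (bottom) is None. *)
Record CA (Sigma : Type) := {
  st : finType;
  acc : pred st;
  inp : Sigma -> st;
  inp_inj : injective inp;
  comm : finType;
  bl : st -> option comm;
  br : st -> option comm;
  delta : msg comm -> st -> msg comm -> st
}.
Arguments st {Sigma} _. Arguments acc {Sigma} _ _. Arguments inp {Sigma} _ _.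
Arguments comm {Sigma} _. Arguments bl {Sigma} _ _. Arguments br {Sigma} _ _.
Arguments delta {Sigma} _ _ _ _.

Definition is_OCA (Sigma : Type) (M : CA Sigma) : Prop := forall s, br M s = None.

Section Run.
Variables (Sigma : Type) (M : CA Sigma).
(* lb = true : the leftmost cell receives # at the first step (two-way CA);
   lb = false: the leftmost cell gets no boundary symbol (OCA).
   Cells are numbered 0 .. n-1 (paper: 1 .. n). *)
Variable lb : bool.

Definition lmsg (c : nat -> st M) (t i : nat) : msg (comm M) :=
  if i == 0 then (if lb && (t == 0) then MBound else MNone)
  else of_opt (br M (c i.-1)).

Definition rmsg (n : nat) (c : nat -> st M) (t i : nat) : msg (comm M) :=
  if i.+1 == n then (if t == 0 then MBound else MNone)
  else of_opt (bl M (c i.+1)).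

(* Configuration c_t on input w; x0 is only a dummy default letter. *)
Fixpoint conf (x0 : Sigma) (w : seq Sigma) (t : nat) : nat -> st M :=
  match t with
  | 0 => fun i => inp M (nth x0 w i)
  | t'.+1 => let c := conf x0 w t' in
             fun i => delta M (lmsg c t' i) (c i) (rmsg (size w) c t' i)
  end.

Definition accepts_within (w : seq Sigma) (T : nat) : Prop :=
  match w with
  | [::] => False
  | x :: _ => exists2 t, t <= T & acc M (conf x w t 0)
  end.

Definition accepts (w : seq Sigma) : Prop := exists T, accepts_within w T.

Definition com (x0 : Sigma) (w : seq Sigma) (i T : nat) : nat :=
  #|[pred j : 'I_T | (br M (conf x0 w j i) != None)
                     || (bl M (conf x0 w j i.+1) != None)]|.

Definition mcom (w : seq Sigma) (T : nat) : nat :=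
  match w with
  | [::] => 0
  | x :: _ => \max_(i < (size w).-1) com x w i T
  end.
End Run.

Definition bigO (g f : nat -> nat) : Prop :=
  exists C N, forall n, N <= n -> g n <= C * f n.

Definition in_Lrt_MC_OCA (Sigma : Type) (f : nat -> nat) (L : seq Sigma -> Prop) : Prop :=
  exists M : CA Sigma,
    [/\ is_OCA M,
        (forall w, L w <-> accepts M false w),
        (forall w, accepts M false w -> accepts_within M false w (size w)) &
        exists g, bigO g f /\
          forall w, accepts M false w -> mcom M false w (size w) <= g (size w)].

Inductive abc := a | b | c.

Definition L2 (w : seq abc) : Prop :=
  exists n, 1 <= n /\ w = nseq (2 ^ n) a ++ nseq n b ++ nseq (2 ^ n + n) c.

(* Main.v *)
Require Import Defs.
From HB Require Import structures.
From mathcomp Require Import all_boot.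
From Stdlib Require Import Lia.
Set Implicit Arguments. Unset Strict Implicit. Unset Printing Implicit Defensive.
Set Warnings "-notation-overridden -redundant-canonical-projection -projection-no-head-constant".


Ltac tolia := repeat match goal with
 | H : is_true (_ <= _) |- _ => apply (elimT leP) in H
 | H : is_true (_ == _) |- _ => apply (elimT eqP) in H
 | H : is_true (~~ (_ == _)) |- _ => apply (elimT negP) in H
 | H : is_true (~~ (_ <= _)) |- _ => rewrite -ltnNge in H
 | |- is_true (_ <= _) => apply (introT leP)
 | |- is_true (_ == _) => apply (introT eqP)
 | |- is_true (~~ (_ == _)) => apply (introT negP); let H := fresh in intro H
 | |- is_true (~~ (_ <= _)) => rewrite -ltnNge
 end;
 repeat match goal with
 | H : ~ is_true (_ == _) |- _ => let H' := fresh in assert (H' := fun e => H (introT eqP e)); clear H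
 end;
 unfold addn, subn, muln in *; lia.

Definition abc_enc (x : abc) : 'I_3 := match x with a => inord 0 | b => inord 1 | c => inord 2 end.
Definition abc_dec (i : 'I_3) : abc := match val i with 0 => a | 1 => b | _ => c end.
Lemma abc_encK : cancel abc_enc abc_dec. Proof. by case; rewrite /abc_dec /= inordK. Qed.
HB.instance Definition _ := Finite.copy abc (can_type abc_encK).

Inductive nbT := NA | NB | NC | NBd | NUn.
Definition nbT_enc (x : nbT) : 'I_5 := match x with NA => inord 0 | NB => inord 1 | NC => inord 2 | NBd => inord 3 | NUn => inord 4 end.
Definition nbT_dec (i : 'I_5) : nbT := match val i with 0 => NA | 1 => NB | 2 => NC | 3 => NBd | _ => NUn end.
Lemma nbT_encK : cancel nbT_enc nbT_dec. Proof. by case; rewrite /nbT_dec /= inordK. Qed.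
HB.instance Definition _ := Finite.copy nbT (can_type nbT_encK).

Inductive fT := Fn | Fp | Fd.
Definition fT_enc (x : fT) : 'I_3 := match x with Fn => inord 0 | Fp => inord 1 | Fd => inord 2 end.
Definition fT_dec (i : 'I_3) : fT := match val i with 0 => Fn | 1 => Fp | _ => Fd end.
Lemma fT_encK : cancel fT_enc fT_dec. Proof. by case; rewrite /fT_dec /= inordK. Qed.
HB.instance Definition _ := Finite.copy fT (can_type fT_encK).

Inductive kT := Kn | K1 | K2 | Kd.
Definition kT_enc (x : kT) : 'I_4 := match x with Kn => inord 0 | K1 => inord 1 | K2 => inord 2 | Kd => inord 3 end.
Definition kT_dec (i : 'I_4) : kT := match val i with 0 => Kn | 1 => K1 | 2 => K2 | _ => Kd end.
Lemma kT_encK : cancel kT_enc kT_dec. Proof. by case; rewrite /kT_dec /= inordK. Qed.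
HB.instance Definition _ := Finite.copy kT (can_type kT_encK).

Inductive gT := Gn | G1 | G2 | G3 | Gd.
Definition gT_enc (x : gT) : 'I_5 := match x with Gn => inord 0 | G1 => inord 1 | G2 => inord 2 | G3 => inord 3 | Gd => inord 4 end.
Definition gT_dec (i : 'I_5) : gT := match val i with 0 => Gn | 1 => G1 | 2 => G2 | 3 => G3 | _ => Gd end.
Lemma gT_encK : cancel gT_enc gT_dec. Proof. by case; rewrite /gT_dec /= inordK. Qed.
HB.instance Definition _ := Finite.copy gT (can_type gT_encK).

Inductive lT := Qn | Q0 | Q1 | Q2 | Q3 | Qd.
Definition lT_enc (x : lT) : 'I_6 := match x with Qn => inord 0 | Q0 => inord 1 | Q1 => inord 2 | Q2 => inord 3 | Q3 => inord 4 | Qd => inord 5 end.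
Definition lT_dec (i : 'I_6) : lT := match val i with 0 => Qn | 1 => Q0 | 2 => Q1 | 3 => Q2 | 4 => Q3 | _ => Qd end.
Lemma lT_encK : cancel lT_enc lT_dec. Proof. by case; rewrite /lT_dec /= inordK. Qed.
HB.instance Definition _ := Finite.copy lT (can_type lT_encK).

Inductive zT := Zn | Zp | Zw | Zm | Zd.
Definition zT_enc (x : zT) : 'I_5 := match x with Zn => inord 0 | Zp => inord 1 | Zw => inord 2 | Zm => inord 3 | Zd => inord 4 end.
Definition zT_dec (i : 'I_5) : zT := match val i with 0 => Zn | 1 => Zp | 2 => Zw | 3 => Zm | _ => Zd end.
Lemma zT_encK : cancel zT_enc zT_dec. Proof. by case; rewrite /zT_dec /= inordK. Qed.
HB.instance Definition _ := Finite.copy zT (can_type zT_encK).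

Record rs := RS { me : abc; nb : nbT; fF : fT; kK : kT; hH : kT; gG : gT;
                  l1 : kT; l2 : lT; zz : zT; okb : bool }.
Definition rs_enc (r : rs) := (me r, nb r, fF r, kK r, hH r, gG r, l1 r, l2 r, zz r, okb r).
Definition rs_dec (x : abc * nbT * fT * kT * kT * gT * kT * lT * zT * bool) : rs :=
  let: (x1, x2, x3, x4, x5, x6, x7, x8, x9, x10) := x in RS x1 x2 x3 x4 x5 x6 x7 x8 x9 x10.
Lemma rs_encK : cancel rs_enc rs_dec. Proof. by case. Qed.
HB.instance Definition _ := Finite.copy rs (can_type rs_encK).

Record mR := MR { mlet : option abc; mF : bool; mK : bool; mH : bool; mG : bool;
                  mL1 : bool; mL2 : bool; mZ : bool }.
Definition mR_enc (r : mR) := (mlet r, mF r, mK r, mH r, mG r, mL1 r, mL2 r, mZ r).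
Definition mR_dec (x : option abc * bool * bool * bool * bool * bool * bool * bool) : mR :=
  let: (x1, x2, x3, x4, x5, x6, x7, x8) := x in MR x1 x2 x3 x4 x5 x6 x7 x8.
Lemma mR_encK : cancel mR_enc mR_dec. Proof. by case. Qed.
HB.instance Definition _ := Finite.copy mR (can_type mR_encK).

Definition stT : finType := (abc + rs)%type.

Definition marker (r : rs) : bool := match zz r with Zw | Zm => true | _ => false end.
Definition sF r := if fF r is Fp then true else false.
Definition sK r := if kK r is K2 then true else false.
Definition sH r := match hH r with K1 => if me r is a then false else true | K2 => true | _ => false end.
Definition sG r := match gG r with G2 => ~~ marker r | G3 => true | _ => false end.
Definition sL1 r := if l1 r is K2 then true else false.
Definition sL2 r := if l2 r is Q3 then true else false.
Definition sZ r := match zz r with Zp => true | Zw => (if l2 r is Q1 then true else false) | _ => false end.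
Definition anysend r := [|| sF r, sK r, sH r, sG r, sL1 r, sL2 r | sZ r].
Definition outm r := MR None (sF r) (sK r) (sH r) (sG r) (sL1 r) (sL2 r) (sZ r).
Definition mr0 := MR None false false false false false false false.

Definition blf (s : stT) : option mR :=
  match s with
  | inl x => Some (MR (Some x) false false false false false false false)
  | inr r => if anysend r then Some (outm r) else None
  end.

Definition inm (m : msg mR) : mR := if m is MSym x then x else mr0.
Definition lnb (x : option abc) : nbT := match x with Some a => NA | Some b => NB | Some c => NC | None => NUn end.

Definition kstep (k : kT) (bb : bool) : kT :=
  match k with Kn => if bb then K1 else Kn | K1 => K2 | _ => Kd end.

Definition good (x : abc) (y : nbT) : bool :=
  match x, y with a, NA | a, NB | b, NB | b, NC | c, NC | c, NBd => true | _, _ => false end.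

Definition init_tr (x : abc) (m : msg mR) : rs :=
  let y := match m with MBound => NBd | MSym r => lnb (mlet r) | MNone => NUn end in
  let orig := (if x is a then true else false) && (if y is NB then true else false) in
  let lastb := (if x is b then true else false) && (if y is NC then true else false) in
  RS x y (if (if m is MBound then true else false) && (if x is c then true else false) then Fp else Fn)
     (if lastb then K1 else Kn) (if lastb then K1 else Kn)
     (if orig then G1 else Gn) (if orig then K1 else Kn) (if orig then Q0 else Qn)
     (if orig then Zw else Zn) false.

Definition run_tr (r : rs) (i : mR) : rs :=
  RS (me r) (nb r)
     (match fF r with Fn => if mF i && good (me r) (nb r) then Fp else Fn | _ => Fd end)
     (kstep (kK r) (mK i))
     (match hH r with Kn => if mH i then K1 else Kn | K1 => (if me r is a then K2 else Kd) | _ => Kd end)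
     (match gG r with Gn => if mG i then G1 else Gn | G1 => G2 | G2 => if marker r then G3 else Gd | _ => Gd end)
     (kstep (l1 r) (mL1 i))
     (match l2 r with Qn => if mL2 i then Q1 else Qn | Q0 => Q1 | Q1 => Q2 | Q2 => Q3 | _ => Qd end)
     (match zz r with Zn => if mZ i then (if mL1 i then Zw else Zp) else Zn
                    | Zp => Zd | Zw => (if l2 r is Q1 then Zm else Zw) | Zm => Zm | Zd => Zd end)
     (okb r || [&& (if gG r is Gn then true else false), mG i, (if hH r is Kn then true else false) & mH i]).

Definition deltaf (lm : msg mR) (s : stT) (m : msg mR) : stT :=
  match s with inl x => inr (init_tr x m) | inr r => inr (run_tr r (inm m)) end.

Definition accf (s : stT) : bool :=
  match s with inr r => [&& (if me r is a then true else false), sF r, sK r, marker r & okb r] | _ => false end.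

Definition inpf (x : abc) : stT := inl x.
Lemma inpf_inj : injective inpf. Proof. by move=> x y [->]. Qed.

Definition MM : CA abc := {| st := stT; acc := accf; inp := inpf; inp_inj := inpf_inj;
   comm := mR; bl := blf; br := fun _ => None; delta := deltaf |}.


Definition cF (f : fT) := if f is Fd then 0 else 1.
Definition cK (k : kT) := if k is Kd then 0 else 1.
Definition cG (g : gT) := if g is Gd then 0 else 1.
Definition cL (l : lT) := if l is Qd then 0 else 1.
Definition cZ (z : zT) := match z with Zm | Zd => 0 | _ => 1 end.
Definition phi (s : stT) : nat :=
  match s with inl _ => 8
  | inr r => cF (fF r) + cK (kK r) + cK (hH r) + cG (gG r) + cK (l1 r) + cL (l2 r) + cZ (zz r) end.

Lemma phi_inr r : phi (inr r) <= 7.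
Proof.
have hF : cF (fF r) <= 1 by case: (fF r).
have hK : cK (kK r) <= 1 by case: (kK r).
have hH : cK (hH r) <= 1 by case: (hH r).
have hG : cG (gG r) <= 1 by case: (gG r).
have h1 : cK (l1 r) <= 1 by case: (l1 r).
have h2 : cL (l2 r) <= 1 by case: (l2 r).
have hZ : cZ (zz r) <= 1 by case: (zz r).
rewrite /phi; tolia.
Qed.

Lemma eF f bb : cF (match f with Fn => if bb then Fp else Fn | _ => Fd end) + nat_of_bool (if f is Fp then true else false) <= cF f.
Proof. by case: f => //; case: bb. Qed.
Lemma eK k bb : cK (kstep k bb) + nat_of_bool (if k is K2 then true else false) <= cK k.
Proof. by case: k => //=; case: bb. Qed.
Lemma eH h x bb : cK (match h with Kn => if bb then K1 else Kn | K1 => (if x is a then K2 else Kd) | _ => Kd end)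
        + nat_of_bool (match h with K1 => if x is a then false else true | K2 => true | _ => false end) <= cK h.
Proof. by case: h => //=; case: x => //; case: bb. Qed.
Lemma eG g mk bb : cG (match g with Gn => if bb then G1 else Gn | G1 => G2 | G2 => if mk then G3 else Gd | _ => Gd end)
        + nat_of_bool (match g with G2 => ~~ mk | G3 => true | _ => false end) <= cG g.
Proof. by case: g => //=; case: mk => //=; case: bb. Qed.
Lemma eL l' bb : cL (match l' with Qn => if bb then Q1 else Qn | Q0 => Q1 | Q1 => Q2 | Q2 => Q3 | _ => Qd end)
        + nat_of_bool (if l' is Q3 then true else false) <= cL l'.
Proof. by case: l' => //=; case: bb. Qed.
Lemma eZ z l' b1 b2 : cZ (match z with Zn => if b1 then (if b2 then Zw else Zp) else Zn
                    | Zp => Zd | Zw => (if l' is Q1 then Zm else Zw) | Zm => Zm | Zd => Zd end)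
        + nat_of_bool (match z with Zp => true | Zw => (if l' is Q1 then true else false) | _ => false end) <= cZ z.
Proof. by case: z => //=; [case: b1; case: b2 | case: l']. Qed.

Lemma any_le r : (anysend r : nat) <= sF r + sK r + sH r + sG r + sL1 r + sL2 r + sZ r.
Proof.
rewrite /anysend; case: (sF r); case: (sK r); case: (sH r); case: (sG r);
case: (sL1 r); case: (sL2 r); case: (sZ r) => //.
Qed.

Lemma phi_h1 r i : cF (fF (run_tr r i)) + sF r <= cF (fF r).
Proof. by case: r => ? ? ? ? ? ? ? ? ? ?; apply: eF. Qed.
Lemma phi_h2 r i : cK (kK (run_tr r i)) + sK r <= cK (kK r).
Proof. by case: r => ? ? ? ? ? ? ? ? ? ?; apply: eK. Qed.
Lemma phi_h3 r i : cK (hH (run_tr r i)) + sH r <= cK (hH r).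
Proof. by case: r => ? ? ? ? ? ? ? ? ? ?; apply: eH. Qed.
Lemma phi_h4 r i : cG (gG (run_tr r i)) + sG r <= cG (gG r).
Proof. by case: r => ? ? ? ? ? ? ? ? ? ?; apply: eG. Qed.
Lemma phi_h5 r i : cK (l1 (run_tr r i)) + sL1 r <= cK (l1 r).
Proof. by case: r => ? ? ? ? ? ? ? ? ? ?; apply: eK. Qed.
Lemma phi_h6 r i : cL (l2 (run_tr r i)) + sL2 r <= cL (l2 r).
Proof. by case: r => ? ? ? ? ? ? ? ? ? ?; apply: eL. Qed.
Lemma phi_h7 r i : cZ (zz (run_tr r i)) + sZ r <= cZ (zz r).
Proof. by case: r => ? ? ? ? ? ? ? ? ? ?; apply: eZ. Qed.

Lemma phi_run r i : phi (inr (run_tr r i)) + anysend r <= phi (inr r).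
Proof.
have h1 := phi_h1 r i.
have h2 := phi_h2 r i.
have h3 := phi_h3 r i.
have h4 := phi_h4 r i.
have h5 := phi_h5 r i.
have h6 := phi_h6 r i.
have h7 := phi_h7 r i.
have h8 := any_le r.
rewrite /phi; tolia.
Qed.

Lemma phi_le lm s m : phi (deltaf lm s m) <= phi s.
Proof.
case: s => [x|r]; rewrite /deltaf; first by apply: leq_trans (phi_inr _) _.
by apply: leq_trans (phi_run r (inm m)); apply: leq_addr.
Qed.

Lemma phi_lt lm s m : blf s != None -> phi (deltaf lm s m) < phi s.
Proof.
case: s => [x|r]; rewrite /deltaf; first by move=> _; apply: leq_ltn_trans (phi_inr _) _.
rewrite /blf; case H: (anysend r) => // _.
by apply: leq_trans (phi_run r (inm m)); rewrite H addn1.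
Qed.

Lemma card_predS T (P : nat -> bool) :
  #|[pred j : 'I_T.+1 | P j]| = #|[pred j : 'I_T | P j]| + P T.
Proof.
rewrite -!sum1_card !(big_mkcond (fun j => j \in _)) big_ord_recr /=.
by rewrite !inE; case: (P T).
Qed.

Lemma count_bound (f : nat -> stT) (P : nat -> bool) :
  (forall j, phi (f j.+1) <= phi (f j)) -> (forall j, P j -> phi (f j.+1) < phi (f j)) ->
  forall T, #|[pred j : 'I_T | P j]| + phi (f T) <= phi (f 0).
Proof.
move=> Hle Hlt; elim=> [|T IH].
  have -> : #|[pred j : 'I_0 | P j]| = 0.
    by apply/eqP; rewrite -leqn0; apply: leq_trans (max_card _) _; rewrite card_ord.
  by [].
rewrite card_predS.
case HP: (P T) => /=.
  have := Hlt T HP; move: IH => /= H1 H2; tolia.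
have := Hle T; move: IH => /= H1 H2; tolia.
Qed.

Lemma com_bound x0 w i T : com MM false x0 w i T <= 8.
Proof.
rewrite /com.
have H := @count_bound (fun j => conf MM false x0 w j i.+1)
  (fun j => (br MM (conf MM false x0 w j i) != None) || (bl MM (conf MM false x0 w j i.+1) != None))
  (fun j => phi_le _ _ _) (fun j Hj => phi_lt _ _ Hj) T.
apply: leq_trans (leq_trans (leq_addr _ _) H) _.
by rewrite /=; case: (nth x0 w i.+1).
Qed.

Lemma mcom_bound w T : mcom MM false w T <= 8.
Proof.
case: w => [|x w] //=.
by apply/bigmax_leqP => j _; apply: com_bound.
Qed.


Ltac normh := repeat match goal with
 | H : (_ <= _) = false |- _ => apply negbT in H; rewrite -ltnNge in H
 | H : (_ <= _) = true |- _ => apply (elimT leP) in H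
 | H : (_ == _) = true |- _ => apply (elimT eqP) in H
 | H : (_ == _) = false |- _ => apply negbT in H
 | H : (_ && _) = true |- _ => let H1 := fresh in let H2 := fresh in case/andP: H => H1 H2
 | H : is_true (_ && _) |- _ => let H1 := fresh in let H2 := fresh in case/andP: H => H1 H2
 end.
Ltac tl := intros; normh; tolia.

Definition q2 D := 2 ^ trunc_log 2 D.
Definition zs D := 2 * q2 D + D - 1.
Definition za D := zs D.-1 + 1.
Definition mk D := (D == 1) || (za D == 2 * D - 1).
Fixpoint cnt D := match D with 0 => 0 | D'.+1 => cnt D' + ((0 < D') && mk D') end.
Definition gA D := 2 * D - 1 + cnt D.

Lemma q2_bounds D : 0 < D -> q2 D <= D < 2 * q2 D.
Proof.
move=> HD; rewrite /q2; apply/andP; split; first by apply: trunc_logP.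
by rewrite mulnC -expnSr; apply: trunc_log_ltn.
Qed.

Lemma tl_step D : 0 < D ->
  trunc_log 2 D.+1 = if D.+1 == 2 * q2 D then (trunc_log 2 D).+1 else trunc_log 2 D.
Proof.
move=> HD; have /andP[h1 h2] := q2_bounds HD.
case: ifP => H.
  by rewrite (eqP H) /q2 mulnC -expnSr trunc_expnK.
apply: trunc_log_eq => //; apply/andP; split.
  by apply: leq_trans h1 _; rewrite /q2.
move: H h2; rewrite /q2 expnS => H h2; move/negbT: H => H; tl.
Qed.

Lemma q2_1 : q2 1 = 1. Proof. by rewrite /q2 trunc_log1. Qed.

Lemma za_ge D : 1 < D -> 2 * D - 1 <= za D.
Proof.
move=> HD; rewrite /za /zs.
have /andP[h1 h2] := @q2_bounds D.-1 (ltac:(tl)).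
tl.
Qed.

Lemma zs_mk D : 0 < D -> mk D -> zs D = 3 * D - 1.
Proof.
move=> HD; rewrite /mk; case/orP => [/eqP->|H]; first by rewrite /zs q2_1.
have HD2 : 1 < D.
  case: D HD H => [|[|D]] //.
have e : D = (D.-1).+1 by tl.
have H' : D == 2 * q2 D.-1 by move: H; rewrite /za /zs; tl.
have hq : q2 D = D.
  rewrite /q2 e tl_step; last by tl.
  by rewrite -e H' expnS -/(q2 D.-1) -(eqP H').
by rewrite /zs hq; tl.
Qed.

Lemma zs_nmk D : 1 < D -> ~~ mk D -> zs D = za D.
Proof.
move=> HD; rewrite /mk negb_or => /andP[_ H].
have e : D = (D.-1).+1 by tl.
have H' : D != 2 * q2 D.-1 by move: H; rewrite /za /zs; tl.
have hq : q2 D = q2 D.-1.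
  rewrite /q2 e tl_step; last by tl.
  by rewrite -e (negbTE H').
by rewrite /za /zs hq; tl.
Qed.

Lemma mkS D : 0 < D -> mk D.+1 = (D.+1 == 2 * q2 D).
Proof.
move=> HD; rewrite /mk /za /zs.
have -> : (D.+1 == 1) = false by case: D HD.
rewrite /=; apply/idP/idP => /eqP H; apply/eqP; tl.
Qed.

Lemma cnt_tl D : 0 < D -> cnt D.+1 = (trunc_log 2 D).+1.
Proof.
elim: D => [|D IH] // _.
case: D IH => [|D] IH; first by rewrite /= trunc_log1.
rewrite [cnt _]/= -/(cnt D.+2) IH // /= mkS // (@tl_step D.+1) //.
by case: (_ == _); rewrite ?addn1 ?addn0.
Qed.

Lemma gA_S D : 0 < D -> gA D.+1 = gA D + 2 + mk D.
Proof. move=> HD; rewrite /gA /= HD /=; tl. Qed.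

Lemma gA_ge D : 2 * D - 1 <= gA D.
Proof. rewrite /gA; apply: leq_addr. Qed.

Lemma gA_1 : gA 1 = 1. Proof. by []. Qed.

Lemma mk_pow m : 0 < m -> mk (2 ^ m) /\ cnt (2 ^ m) = m.
Proof.
case: m => [|m] // _.
have hp : 0 < 2 ^ m by rewrite expn_gt0.
have e : 2 ^ m.+1 = (2 ^ m.+1).-1.+1 by rewrite expnS; tl.
have htl : trunc_log 2 (2 ^ m.+1).-1 = m.
  apply: trunc_log_eq => //; apply/andP; split; rewrite expnS; tl.
have hpos : 0 < (2 ^ m.+1).-1 by rewrite expnS; tl.
split.
  rewrite e mkS // -e /q2 htl -expnS; by [].
by rewrite e cnt_tl // htl.
Qed.

Lemma pow_of_mk D n : 0 < n -> mk D -> cnt D = n -> D = 2 ^ n.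
Proof.
move=> Hn; case: D => [|D]; first by move=> _ /= H; move: Hn; rewrite -H.
case: D => [|D]; first by move=> _ /= H; move: Hn; rewrite -H.
rewrite mkS // cnt_tl // => /eqP -> <-.
by rewrite /q2 -expnS.
Qed.


Definition rdef (x : abc) := RS x NUn Fn Kn Kn Gn Kn Qn Zn false.
Definition Sf x0 w t i : rs :=
  match conf MM false x0 w t i with inr r => r | inl x => rdef x end.

Lemma conf_inr x0 w t i : conf MM false x0 w t.+1 i = inr (Sf x0 w t.+1 i).
Proof. by rewrite /Sf /=; case: (conf MM false x0 w t i). Qed.

Definition msg0 (x : abc) := MR (Some x) false false false false false false false.

Lemma Sf1 x0 w i : Sf x0 w 1 i =
  init_tr (nth x0 w i) (if i.+1 == size w then MBound else MSym (msg0 (nth x0 w i.+1))).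
Proof. by rewrite /Sf /= /rmsg; case: ifP. Qed.

Lemma inm_blf r : inm (of_opt (blf (inr r))) = outm r.
Proof.
rewrite /blf; case H: (anysend r) => //=.
move: H; rewrite /anysend /outm /mr0.
by case: (sF r); case: (sK r); case: (sH r); case: (sG r); case: (sL1 r); case: (sL2 r); case: (sZ r).
Qed.

Lemma conf_step x0 w t i : conf MM false x0 w t.+1 i =
  deltaf (lmsg false (conf MM false x0 w t) t i) (conf MM false x0 w t i)
         (rmsg (size w) (conf MM false x0 w t) t i).
Proof. by []. Qed.

Lemma SfS x0 w t i : 0 < t ->
  Sf x0 w t.+1 i = run_tr (Sf x0 w t i) (if i.+1 == size w then mr0 else outm (Sf x0 w t i.+1)).
Proof.
case: t => [|t] // _.
rewrite {1}/Sf conf_step conf_inr /rmsg; case: ifP => _; first by [].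
by rewrite conf_inr /deltaf inm_blf.
Qed.

Definition nbof x0 (w : seq abc) i := if i.+1 == size w then NBd else lnb (Some (nth x0 w i.+1)).

Lemma Sf_menb x0 w t i : 0 < t -> me (Sf x0 w t i) = nth x0 w i /\ nb (Sf x0 w t i) = nbof x0 w i.
Proof.
elim: t i => [|t IH] i // _.
case: t IH => [|t] IH.
  by rewrite Sf1 /nbof; case: ifP.
by rewrite SfS //=; apply: IH.
Qed.

Definition goodc x0 w j := good (nth x0 w j) (nbof x0 w j).

Lemma Sf_F x0 w t i : i < size w -> fF (Sf x0 w t.+1 i) = Fp ->
  t.+1 + i = size w /\ (forall j, i <= j < size w -> goodc x0 w j).
Proof.
elim: t i => [|t IH] i Hi.
  rewrite Sf1; case: ifP => H /=.
    case E: (nth x0 w i) => //= _; split; first by rewrite add1n (eqP H).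
    move=> j /andP[h1 h2]; have ej : j = i by move/eqP: H; tl.
    by rewrite /goodc ej E /nbof H.
  by [].
rewrite SfS //= /run_tr /=.
case EF: (fF (Sf x0 w t.+1 i)) => //.
case: ifP => //.
case: ifP => Hn //=.
move=> /andP[hF hg] _.
have hF' : fF (Sf x0 w t.+1 i.+1) = Fp by move: hF; rewrite /sF; case: (fF _).
have Hi1 : i.+1 < size w by move/negbT: Hn; tl.
have [h1 h2] := IH i.+1 Hi1 hF'.
split; first by tl.
move=> j /andP[hj1 hj2].
case: (ltngtP i j) hj1 => // [hij|hij] _.
  by apply: h2; rewrite hij hj2.
have [hme hnb] := @Sf_menb x0 w t.+1 i (ltn0Sn _).
by rewrite /goodc -hij -hme -hnb.
Qed.

Fixpoint gch (x : abc) (u : seq abc) : bool :=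
  match u with [::] => good x NBd | y :: u' => good x (lnb (Some y)) && gch y u' end.

Lemma gch_of x0 u x : (forall j, j < (size u).+1 -> goodc x0 (x :: u) j) -> gch x u.
Proof.
elim: u x => [|y u IH] x H /=.
  by have := H 0 (ltnSn _); rewrite /goodc /nbof.
apply/andP; split.
  by have := H 0 (ltn0Sn _); rewrite /goodc /nbof /=; case: (size u).
apply: IH => j Hj.
have Hj' : j.+1 < (size (y :: u)).+1 by rewrite /= ltnS.
have := H j.+1 Hj'.
by rewrite /goodc /nbof /=.
Qed.

Lemma gch_c u : gch c u -> c :: u = nseq (size u).+1 c.
Proof.
elim: u => [|y u IH] //=.
case: y => //= H; by rewrite (IH H).
Qed.

Lemma gch_b u : gch b u -> exists n C, [/\ 0 < n, 0 < C & b :: u = nseq n b ++ nseq C c].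
Proof.
elim: u => [|y u IH] //=.
case: y => //= H.
  have [n [C [h1 h2 ->]]] := IH H.
  by exists n.+1, C.
exists 1, (size u).+1; split => //.
by rewrite /= (gch_c H).
Qed.

Lemma gch_a u : gch a u -> exists A n C, [/\ 0 < A, 0 < n, 0 < C &
  a :: u = nseq A a ++ nseq n b ++ nseq C c].
Proof.
elim: u => [|y u IH] //=.
case: y => //= H.
  have [A [n [C [h1 h2 h3 ->]]]] := IH H.
  by exists A.+1, n, C.
have [n [C [h1 h2 ->]]] := gch_b H.
by exists 1, n, C.
Qed.


Definition phase2 s t := if t < s then Kn else if t == s then K1 else if t == s.+1 then K2 else Kd.
Definition phase1 s t := if t < s then Kn else if t == s then K1 else Kd.
Definition phase3 s t := if t < s then Qn else if t == s then Q1 else if t == s.+1 then Q2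
                         else if t == s.+2 then Q3 else Qd.
Definition l2f D t := if (D == 1) && (t == 1) then Q0 else phase3 (3 * D - 1) t.
Definition gph s (m : bool) t := if t < s then Gn else if t == s then G1 else if t == s.+1 then G2
                                 else if (t == s.+2) && m then G3 else Gd.
Definition zf D t := if mk D then (if t < 2 * D - 1 then Zn else if t < 3 * D then Zw else Zm)
                     else (if t < za D then Zn else if t == za D then Zp else Zd).

Ltac fin := first [ done | (exfalso; tl) | tl
  | (apply/esym/eqP; tl) | (apply/esym; apply: negbTE; rewrite ?ltnNge ?negbK; tl)
  | (apply/esym; apply: negbTE; apply/eqP; tl)
  | (apply/idP/idP => /eqP ?; apply/eqP; tl) ].
Ltac decide_ifs := repeat match goal with
  | |- context[if ?cnd then _ else _] =>
      first [ let E := fresh in (have E : cnd by tl); progress rewrite E /=; clear E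
            | let E := fresh in (have E : ~~ cnd by tl); progress rewrite (negbTE E) /=; clear E ] end.
Ltac split1 := match goal with |- context[if ?cnd then _ else _] =>
   lazymatch cnd with context[if _ then _ else _] => fail | _ => let H := fresh in case: (boolP cnd) => H /= end end.
Ltac cases := decide_ifs; repeat (split1; decide_ifs); try fin.

Definition isK2 k := if k is K2 then true else false.
Definition isK1 k := if k is K1 then true else false.
Definition isKn k := if k is Kn then true else false.

Lemma P2step s t : kstep (phase2 s t) (t.+1 == s) = phase2 s t.+1.
Proof. rewrite /phase2; cases. Qed.
Lemma P2K2 s t : isK2 (phase2 s t) = (t == s.+1).
Proof. rewrite /phase2; cases. Qed.
Lemma P2Kn s t : isKn (phase2 s t) = (t < s).
Proof. rewrite /phase2; cases. Qed.

Definition hstep (x : abc) h bb := match h with Kn => if bb then K1 else Kn | K1 => (if x is a then K2 else Kd) | _ => Kd end.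
Lemma hstep_a k bb : hstep a k bb = kstep k bb. Proof. by case: k. Qed.
Lemma P1step s t : hstep b (phase1 s t) (t.+1 == s) = phase1 s t.+1.
Proof. rewrite /phase1; cases. Qed.
Lemma P1K1 s t : isK1 (phase1 s t) = (t == s).
Proof. rewrite /phase1; cases. Qed.
Lemma P1Kn s t : isKn (phase1 s t) = (t < s).
Proof. rewrite /phase1; cases. Qed.

Definition l2step l bb := match l with Qn => if bb then Q1 else Qn | Q0 => Q1 | Q1 => Q2 | Q2 => Q3 | _ => Qd end.
Definition isL1 l := if l is Q1 then true else false.
Definition isL3 l := if l is Q3 then true else false.
Lemma L2step D t : 0 < D -> 0 < t -> l2step (l2f D t) (t.+1 == 3 * D - 1) = l2f D t.+1.
Proof. move=> HD Ht; rewrite /l2f /phase3; cases. Qed.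
Lemma L2L3 D t : 0 < D -> 0 < t -> isL3 (l2f D t) = (t == 3 * D + 1).
Proof. move=> HD Ht; rewrite /l2f /phase3; cases. Qed.
Lemma L2L1 D t : 0 < D -> 0 < t -> isL1 (l2f D t) = (t == 3 * D - 1).
Proof. move=> HD Ht; rewrite /l2f /phase3; cases. Qed.

Definition gstep g bb mkr := match g with Gn => if bb then G1 else Gn | G1 => G2 | G2 => if mkr then G3 else Gd | _ => Gd end.
Lemma Gstep s m t mkr : (t == s.+1 -> mkr = m) -> gstep (gph s m t) (t.+1 == s) mkr = gph s m t.+1.
Proof. move=> H; have [E|E] := boolP (t == s.+1); [rewrite (H E) (eqP E) /gph; case: m {H}; rewrite ?andbT ?andbF; cases | rewrite /gph; case: m H; case: mkr; rewrite ?andbT ?andbF => H; cases]. Qed.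
Lemma Gsend s m t mkr : (t == s.+1 -> mkr = m) ->
  (match gph s m t with G2 => ~~ mkr | G3 => true | _ => false end) = (t == s + 1 + m).
Proof. move=> H; have [E|E] := boolP (t == s.+1); [rewrite (H E) (eqP E) /gph; case: m {H}; rewrite ?andbT ?andbF; cases | rewrite /gph; case: m H; case: mkr; rewrite ?andbT ?andbF => H; cases]. Qed.
Lemma Gn_iff s m t : (if gph s m t is Gn then true else false) = (t < s).
Proof. rewrite /gph; case: m; cases. Qed.

Definition zstep z l bZ bL1 := match z with Zn => if bZ then (if bL1 then Zw else Zp) else Zn
   | Zp => Zd | Zw => (if l is Q1 then Zm else Zw) | Zm => Zm | Zd => Zd end.

Lemma mk1 : mk 1. Proof. by []. Qed.

Lemma Zsend D t : 0 < D -> 0 < t ->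
  (match zf D t with Zp => true | Zw => isL1 (l2f D t) | _ => false end) = (t == zs D).
Proof.
move=> HD Ht; rewrite /zf.
case Hm: (mk D).
  have := zs_mk HD Hm => ->.
  case: ifP => ? /=; first fin.
  case: ifP => ? /=; last fin.
  by rewrite L2L1.
have HD2 : 1 < D by case: D HD Hm => [|[|D]].
rewrite (zs_nmk HD2 (negbT Hm)); cases.
Qed.

Lemma Zstep D t : 1 < D -> 0 < t ->
  zstep (zf D t) (l2f D t) (t.+1 == za D) (t.+1 == 2 * D - 1) = zf D t.+1.
Proof.
move=> HD Ht.
have hza := za_ge HD.
have Hm : mk D = (za D == 2 * D - 1) by rewrite /mk; case: D HD {hza} => [|[|D]].
have HD1 : (D == 1) = false by case: D HD {hza Hm} => [|[|D]].
rewrite /zstep /zf Hm /l2f HD1 /= /phase3; cases.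
Qed.

Lemma Zstep1 t : 0 < t -> zstep (zf 1 t) (l2f 1 t) false false = zf 1 t.+1.
Proof. move=> Ht; rewrite /zstep /zf mk1 /l2f /phase3 /=; cases. Qed.

Lemma Zmark D t : (match zf D t with Zw | Zm => true | _ => false end) = mk D && (2 * D - 1 <= t).
Proof. rewrite /zf; case: (mk D); cases. Qed.

Lemma L2step1 t : 0 < t -> l2step (l2f 1 t) false = l2f 1 t.+1.
Proof. move=> Ht; rewrite /l2f /phase3 /=; cases. Qed.

Lemma kstep_eq s t bb : bb = (t.+1 == s) -> kstep (phase2 s t) bb = phase2 s t.+1.
Proof. by move=> ->; apply: P2step. Qed.

Lemma ok_arith g h t :
  ((g == h) && (g <= t)) || [&& t < g, t.+1 == g, t < h & t.+1 == h] = (g == h) && (g <= t.+1).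
Proof.
apply/idP/idP.
  case/orP => [/andP[/eqP e h1] | /and4P[h1 /eqP e1 h2 /eqP e2]]; apply/andP; split; tl.
move=> /andP[/eqP e h1].
case: (ltngtP g t.+1) => H.
- by apply/orP; left; apply/andP; split => //; tl.
- exfalso; tl.
- by apply/orP; right; apply/and4P; split => //; tl.
Qed.

Lemma zf1 D : 0 < D -> zf D 1 = if D == 1 then Zw else Zn.
Proof.
move=> HD; case: (ltngtP D 1) => h; first by tl.
  have := za_ge h; rewrite /zf /mk; case: ifP => H; cases.
by rewrite h.
Qed.

Lemma gph1 D : 0 < D -> gph (gA D) (mk D) 1 = if D == 1 then G1 else Gn.
Proof.
move=> HD; case: (ltngtP D 1) => h; first by tl.
  have := gA_ge D; rewrite /gph; cases.
by rewrite h.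
Qed.

Lemma l2f1 D : 0 < D -> l2f D 1 = if D == 1 then Q0 else Qn.
Proof. move=> HD; rewrite /l2f /phase3 /= andbT; cases. Qed.

Section Fmt.
Variables (A n C : nat).
Hypotheses (HA : 0 < A) (Hn : 0 < n) (HC : 0 < C).

Definition letter i := if i < A then a else if i < A + n then b else c.
Definition nbE i := if i.+1 == A + n + C then NBd else lnb (Some (letter i.+1)).
Definition fE t i := if t + i < A + n + C then Fn else if t + i == A + n + C then Fp else Fd.
Definition kE t i := if i < A + n then phase2 (1 + 2 * (A + n - 1 - i)) t else Kn.
Definition hE t i := if i < A then phase2 (2 * (A - i) + n - 1) t
                     else if i < A + n then phase1 (A + n - i) t else Kn.
Definition gE t i := if i < A then gph (gA (A - i)) (mk (A - i)) t else Gn.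
Definition l1E t i := if i < A then phase2 (2 * (A - i) - 1) t else Kn.
Definition l2E t i := if i < A then l2f (A - i) t else Qn.
Definition zE t i := if i < A then zf (A - i) t else Zn.
Definition okE t i := if i < A then (gA (A - i) == 2 * (A - i) + n - 1) && (gA (A - i) <= t) else false.
Definition E t i := RS (letter i) (nbE i) (fE t i) (kE t i) (hE t i) (gE t i) (l1E t i) (l2E t i) (zE t i) (okE t i).
Definition inc t i := if i.+1 == A + n + C then mr0 else outm (E t i.+1).

Lemma good_E i : i < A + n + C -> good (letter i) (nbE i).
Proof. move=> Hi; rewrite /good /nbE /letter /lnb; cases. Qed.

Lemma stepF t i : 0 < t -> i < A + n + C ->
  (match fE t i with Fn => if mF (inc t i) && good (letter i) (nbE i) then Fp else Fn | _ => Fd end) = fE t.+1 i.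
Proof.
move=> Ht Hi; rewrite good_E // andbT /inc.
case HN: (i.+1 == A + n + C) => /=.
  rewrite /fE; cases.
have -> : sF (E t i.+1) = (t + i.+1 == A + n + C).
  rewrite /sF /E /= /fE; cases.
rewrite /fE; cases.
Qed.

Lemma stepK t i : 0 < t -> i < A + n + C -> kstep (kE t i) (mK (inc t i)) = kE t.+1 i.
Proof.
move=> Ht Hi; rewrite /inc; case HN: (i.+1 == A + n + C) => /=.
  rewrite /kE; case: ifP => H //; exfalso; tl.
rewrite /sK /= /kE.
case: ifP => H1; last by case: ifP => H2 //; exfalso; tl.
apply: kstep_eq; case: ifP => H2.
  by rewrite -/(isK2 _) P2K2; apply/eqP/eqP; tl.
by apply/esym/negbTE; tl.
Qed.

Lemma sH_E t j : 0 < t -> sH (E t j) =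
  if j < A then (t == 2 * (A - j) + n) else if j < A + n then (t == A + n - j) else false.
Proof. move=> Ht; rewrite /sH /E /= /hE /letter /phase2 /phase1; cases. Qed.

Lemma stepH t i : 0 < t -> i < A + n + C -> hstep (letter i) (hE t i) (mH (inc t i)) = hE t.+1 i.
Proof.
move=> Ht Hi; rewrite /inc; case HN: (i.+1 == A + n + C) => /=.
  rewrite /hE /letter /hstep; cases.
rewrite sH_E // /hE /letter /hstep /phase2 /phase1; cases.
Qed.

Lemma sL1_E t j : sL1 (E t j) = if j < A then (t == 2 * (A - j)) else false.
Proof. rewrite /sL1 /E /= /l1E /phase2; cases. Qed.

Lemma stepL1 t i : 0 < t -> i < A + n + C -> kstep (l1E t i) (mL1 (inc t i)) = l1E t.+1 i.
Proof.
move=> Ht Hi; rewrite /inc; case HN: (i.+1 == A + n + C) => /=.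
  rewrite /l1E /kstep; cases.
rewrite sL1_E /l1E /kstep /phase2; cases.
Qed.

Lemma sL2_E t j : 0 < t -> sL2 (E t j) = if j < A then (t == 3 * (A - j) + 1) else false.
Proof.
move=> Ht; rewrite /sL2 /E /= /l2E; case: ifP => h //.
rewrite -/(isL3 _) L2L3 //; tl.
Qed.

Lemma stepL2 t i : 0 < t -> i < A + n + C -> l2step (l2E t i) (mL2 (inc t i)) = l2E t.+1 i.
Proof.
move=> Ht Hi; rewrite /inc; case HN: (i.+1 == A + n + C) => /=.
  rewrite /l2E; cases.
rewrite sL2_E // /l2E.
case: (ltnP i A) => h1; last by cases.
case: (ltnP i.+1 A) => h2.
  have -> : (t == 3 * (A - i.+1) + 1) = (t.+1 == 3 * (A - i) - 1).
    by apply/idP/idP => /eqP ?; apply/eqP; tl.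
  apply: L2step => //; tl.
have -> : A - i = 1 by tl.
by apply: L2step1.
Qed.

Lemma sZ_E t j : 0 < t -> sZ (E t j) = if j < A then (t == zs (A - j)) else false.
Proof.
move=> Ht; rewrite /sZ /E /= /zE /l2E; case: ifP => h //.
rewrite -/(isL1 _). apply: Zsend => //; tl.
Qed.

Lemma stepZ t i : 0 < t -> i < A + n + C ->
  zstep (zE t i) (l2E t i) (mZ (inc t i)) (mL1 (inc t i)) = zE t.+1 i.
Proof.
move=> Ht Hi; rewrite /inc; case HN: (i.+1 == A + n + C) => /=.
  rewrite /zE /l2E; cases.
rewrite sZ_E // sL1_E /zE /l2E.
case: (ltnP i A) => h1; last by cases.
case: (ltnP i.+1 A) => h2.
  have -> : (t == zs (A - i.+1)) = (t.+1 == za (A - i)).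
    rewrite /za (_ : (A - i).-1 = A - i.+1); last by tl.
    by apply/idP/idP => /eqP ?; apply/eqP; tl.
  have -> : (t == 2 * (A - i.+1)) = (t.+1 == 2 * (A - i) - 1).
    by apply/idP/idP => /eqP ?; apply/eqP; tl.
  apply: Zstep => //; tl.
have -> : A - i = 1 by tl.
by apply: Zstep1.
Qed.

Lemma sG_E t j : 0 < t -> sG (E t j) = if j < A then (t == gA (A - j) + 1 + mk (A - j)) else false.
Proof.
move=> Ht; rewrite /sG /E /marker /= /gE /zE; case: ifP => h //.
apply: Gsend => /eqP ->.
rewrite Zmark; have := gA_ge (A - j).
by case: (mk _) => //= H; apply/eqP; tl.
Qed.

Lemma marker_E t i : marker (E t i) = (i < A) && mk (A - i) && (2 * (A - i) - 1 <= t).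
Proof. by rewrite /marker /E /= /zE; case: ifP => h //; rewrite Zmark. Qed.

Lemma stepG t i : 0 < t -> i < A + n + C ->
  gstep (gE t i) (mG (inc t i)) (marker (E t i)) = gE t.+1 i.
Proof.
move=> Ht Hi; rewrite marker_E /inc; case HN: (i.+1 == A + n + C) => /=.
  rewrite /gE; cases.
rewrite sG_E // /gE.
case: (ltnP i A) => h1; last by cases.
rewrite /=.
have hg := gA_ge (A - i).
have side : t == (gA (A - i)).+1 -> mk (A - i) && (2 * (A - i) - 1 <= t) = mk (A - i).
  by move=> /eqP ->; rewrite (_ : 2 * (A - i) - 1 <= (gA (A - i)).+1) ?andbT //; tl.
case: (ltnP i.+1 A) => h2.
  have -> : (t == gA (A - i.+1) + 1 + mk (A - i.+1)) = (t.+1 == gA (A - i)).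
    rewrite (_ : A - i = (A - i.+1).+1); last by tl.
    rewrite gA_S; last by tl.
    by apply/idP/idP => /eqP ?; apply/eqP; tl.
  exact: Gstep.
have -> : false = (t.+1 == gA (A - i)).
  by rewrite (_ : A - i = 1) ?gA_1; [apply/esym/negbTE; tl | tl].
exact: Gstep.
Qed.

Lemma stepOk t i : 0 < t -> i < A + n + C ->
  okE t i || [&& (if gE t i is Gn then true else false), mG (inc t i),
                 (if hE t i is Kn then true else false) & mH (inc t i)] = okE t.+1 i.
Proof.
move=> Ht Hi; rewrite /inc; case HN: (i.+1 == A + n + C) => /=.
  rewrite /okE /gE; cases.
rewrite sG_E // sH_E // /okE /gE /hE.
case: (ltnP i A) => h1; last by cases.
rewrite /= Gn_iff -/(isKn _) P2Kn.
case: (ltnP i.+1 A) => h2.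
  rewrite (_ : A - i = (A - i.+1).+1); last by tl.
  rewrite gA_S; last by tl.
  rewrite (_ : (t == 2 * (A - i.+1) + n) = (t.+1 == 2 * (A - i.+1).+1 + n - 1)); last first.
    by apply/idP/idP => /eqP ?; apply/eqP; tl.
  rewrite (_ : (t == gA (A - i.+1) + 1 + mk (A - i.+1)) = (t.+1 == gA (A - i.+1) + 2 + mk (A - i.+1))); last first.
    by apply/idP/idP => /eqP ?; apply/eqP; tl.
  by rewrite ok_arith.
have e : A - i = 1 by tl.
rewrite e gA_1 /=.
have -> : (1 == 2 * 1 + n - 1) = false by apply/negbTE; tl.
by rewrite andbF orbF.
Qed.

Lemma step_all t i : 0 < t -> i < A + n + C -> run_tr (E t i) (inc t i) = E t.+1 i.
Proof.
move=> Ht Hi; rewrite [E t.+1 i]/E /run_tr.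
congr RS.
- exact: (stepF Ht Hi).
- exact: (stepK Ht Hi).
- exact: (stepH Ht Hi).
- exact: (stepG Ht Hi).
- exact: (stepL1 Ht Hi).
- exact: (stepL2 Ht Hi).
- exact: (stepZ Ht Hi).
- exact: (stepOk Ht Hi).
Qed.

Lemma ok1 i : i < A -> (gA (A - i) == 2 * (A - i) + n - 1) && (gA (A - i) <= 1) = false.
Proof.
move=> h; case: (ltngtP (A - i) 1) => e; first by tl.
  by have hg := gA_ge (A - i); apply: negbTE; apply/nandP; right; tl.
by rewrite e gA_1; apply: negbTE; apply/nandP; left; tl.
Qed.

Lemma base_E i : i < A + n + C ->
  init_tr (letter i) (if i.+1 == A + n + C then MBound else MSym (msg0 (letter i.+1))) = E 1 i.
Proof.
move=> Hi; rewrite /init_tr /E.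
case: (ltnP i A) => h1.
  rewrite /fE /kE /hE /gE /l1E /l2E /zE /okE /nbE /letter h1.
  rewrite zf1 ?gph1 ?l2f1 ?ok1; try tl.
  rewrite /phase2 /phase1; cases.
rewrite /fE /kE /hE /gE /l1E /l2E /zE /okE /nbE /letter /phase2 /phase1.
cases.
Qed.
End Fmt.


Lemma size_w A n C : size (nseq A a ++ nseq n b ++ nseq C c) = A + n + C.
Proof. by rewrite !size_cat !size_nseq addnA. Qed.

Lemma nth_w A n C x0 i : i < A + n + C -> nth x0 (nseq A a ++ nseq n b ++ nseq C c) i = letter A n i.
Proof.
move=> Hi; rewrite /letter nth_cat size_nseq; case: ifP => h1; first by rewrite nth_nseq h1.
rewrite nth_cat size_nseq; case: ifP => h2.
  by rewrite nth_nseq h2; rewrite ifT //; tl.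
rewrite nth_nseq ifT; last by tl.
by rewrite ifF //; apply: negbTE; tl.
Qed.

Lemma char A n C x0 t i : 0 < A -> 0 < n -> 0 < C -> i < A + n + C ->
  Sf x0 (nseq A a ++ nseq n b ++ nseq C c) t.+1 i = E A n C t.+1 i.
Proof.
move=> HA Hn HC; elim: t i => [|t IH] i Hi.
  rewrite Sf1 size_w nth_w //.
  case HN: (i.+1 == A + n + C).
    by rewrite -(base_E HA Hn HC Hi) HN.
  rewrite nth_w; last by move/negbT: HN; tl.
  by rewrite -(base_E HA Hn HC Hi) HN.
rewrite SfS // size_w IH //.
case HN: (i.+1 == A + n + C).
  by rewrite -(step_all HA Hn HC (ltn0Sn t) Hi) /inc HN.
rewrite IH; last by move/negbT: HN; tl.
by rewrite -(step_all HA Hn HC (ltn0Sn t) Hi) /inc HN.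
Qed.

Lemma aw_cons w x u T : w = x :: u ->
  (exists2 t, t <= T & accf (conf MM false x w t 0)) -> accepts_within MM false w T.
Proof. by move=> ->. Qed.

Lemma L2_acc w : L2 w -> accepts_within MM false w (size w).
Proof.
case=> n [Hn ->].
set A := 2 ^ n.
have HA : 0 < A by rewrite expn_gt0.
have eA : A = A.-1.+1 by tl.
have [hmk hcnt] := mk_pow Hn.
apply: (@aw_cons _ a (nseq A.-1 a ++ nseq n b ++ nseq (A + n) c)); first by rewrite {1}eA.
rewrite size_w.
have -> : A + n + (A + n) = (A + n + (A + n)).-1.+1 by tl.
exists (A + n + (A + n)).-1.+1 => //.
rewrite conf_inr char //; last by tl.
rewrite /accf marker_E /= /letter /sF /fE /sK /kE /okE !subn0 HA /= -/A.
have hmk' : mk A := hmk.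
have hcnt' : cnt A = n := hcnt.
rewrite /fE /kE /phase2 hmk' /gA hcnt' /=.
decide_ifs.
apply/and3P; split; tl.
tl.
Qed.

Lemma acc_L2 w : accepts MM false w -> L2 w.
Proof.
case=> T; case: w => [|x u] //= [t _].
case: t => [|t] //.
rewrite conf_inr /accf => /and5P[hme hF hK hM hO].
have hF' : fF (Sf x (x :: u) t.+1 0) = Fp by move: hF; rewrite /sF; case: (fF _).
have [hN hg] := @Sf_F x (x :: u) t 0 (ltn0Sn _) hF'.
have [hme' _] := @Sf_menb x (x :: u) t.+1 0 (ltn0Sn _).
have ex : x = a by move: hme; rewrite hme' /=; case: x {hF hK hM hO hF' hN hg hme'}.
subst x.
have hgch : gch a u.
  by apply: (@gch_of a) => j hj; apply: hg; rewrite /= hj.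
have [A [n [C [HA Hn HC eu]]]] := gch_a hgch.
rewrite eu in hK hM hO hN *.
have hs := size_w A n C.
rewrite hs in hN.
rewrite char // in hK hM hO; last by tl.
rewrite marker_E HA subn0 /= in hM.
move: hO; rewrite [okb _]/= /okE HA subn0 => /andP[/eqP hO _].
move: hK; rewrite /sK /= /kE -/(isK2 _).
have h0 : 0 < A + n by tl.
rewrite h0 subn0 P2K2 => /eqP hK.
case/andP: hM => hM _.
have hcnt : cnt A = n by move: hO; rewrite /gA; tl.
have eA := pow_of_mk Hn hM hcnt.
exists n; split => //.
have eC : C = 2 ^ n + n by rewrite -eA; tl.
by rewrite eA eC.
Qed.

Theorem mainTheorem2 : in_Lrt_MC_OCA (fun _ => 1) L2.
Proof.
exists MM; split.
- by [].
- move=> w; split => [H|H]; last exact: acc_L2.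
  by exists (size w); apply: L2_acc.
- by move=> w H; apply: L2_acc; apply: acc_L2.
- exists (fun _ => 8); split.
    by exists 8, 0 => k _; rewrite muln1.
  by move=> w _; apply: mcom_bound.
Qed.
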